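(* Define $\mathrm{Mex}(F)=\min(\mathbb{N}_0\setminus F)$ for $F\subseteq\mathbb{N}_0$, and $a+D=\{a+d:d\in D\}$. Define triples $v(n)=(v_1(n),v_2(n),v_3(n))$, $n\ge 0$, recursively by $v(0)=(0,0,0)$ and, for $n\ge 0$, with $F_n=\{v_i(k): 0\le k\le n,\ i\in\{1,2,3\}\}$ and $D_n=\bigcup_{k=0}^{n}\{v_2(k)-v_1(k),\,v_3(k)-v_2(k),\,v_3(k)-v_1(k)\}$, \[ v_1(n+1)=\mathrm{Mex}(F_n),\quad v_2(n+1)=\mathrm{Mex}\big((v_1(n+1)+D_n)\cup\{1,\dots,v_1(n+1)\}\cup F_n\big), \] \[ v_3(n+1)=\mathrm{Mex}\big((v_2(n+1)+D_n)\cup\{1,\dots,v_2(n+1)\}\cup F_n\big). \] For a finite set $K\subseteq\mathbb{N}_0$ let $\mathrm{Bl}(K)$ be the maximum length (number of elements) of a run of consecutive integers $m,m+1,\dots,m+j-1$ contained in $K$ (with $\mathrm{Bl}(\emptyset)=0$). Then for all $n\ge 0$: \[ \mathrm{Bl}\big(F_n\cap[\mathrm{Mex}(F_n),\,\mathrm{Mex}(F_n)+\mathrm{Mex}(D_n)-1]\big)\le 3, \] \[ v_1(n+1)-v_1(n)\in\{1,2,3,4\},\quad v_2(n+1)-v_2(n)\in\{2,3,\dots,8\},\quad v_3(n+1)-v_3(n)\in\{3,4,\dots,12\}, \] and for all $n\ge 1$, $\mathrm{Mex}(D_n)-\mathrm{Mex}(D_{n-1})\in\{1,2,3,4\}$.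
   Context: $\mathbb{N}_0$ denotes the nonnegative integers; $[a,b]$ denotes the integer interval $\{m\in\mathbb{Z}: a\le m\le b\}$. *)

(* Defs.v *)
From mathcomp Require Import all_boot zify.
Set Implicit Arguments. Unset Strict Implicit. Unset Printing Implicit Defensive.

(* Finite subsets of N_0 are represented by sequences (membership = \in). *)

Lemma mex_ex (s : seq nat) : exists m, m \notin s.
Proof.
have le : forall y, y \in s -> y <= sumn s.
  elim: s => [//|x s IH] y /=; rewrite inE => /orP [/eqP ->|H].
    lia.
  by have := IH y H; lia.
exists (sumn s).+1; apply/negP => /le; lia.
Qed.

Definition mex (s : seq nat) : nat := ex_minn (mex_ex s).

Definition triple := (nat * nat * nat)%type.
Definition t1 (t : triple) : nat := t.1.1.
Definition t2 (t : triple) : nat := t.1.2.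
Definition t3 (t : triple) : nat := t.2.

Definition Fof (h : seq triple) : seq nat :=
  flatten [seq [:: t1 t; t2 t; t3 t] | t <- h].
Definition Dof (h : seq triple) : seq nat :=
  flatten [seq [:: t2 t - t1 t; t3 t - t2 t; t3 t - t1 t] | t <- h].

Definition shift (a : nat) (D : seq nat) : seq nat := [seq a + d | d <- D].

Definition next (h : seq triple) : triple :=
  let a := mex (Fof h) in
  let b := mex (shift a (Dof h) ++ iota 1 a ++ Fof h) in
  let c := mex (shift b (Dof h) ++ iota 1 b ++ Fof h) in
  (a, b, c).

Fixpoint vhist (n : nat) : seq triple :=
  match n with
  | 0 => [:: (0, 0, 0)]
  | n'.+1 => rcons (vhist n') (next (vhist n'))
  end.

Definition v (n : nat) : triple := nth (0, 0, 0) (vhist n) n.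
Definition v1 n := t1 (v n).
Definition v2 n := t2 (v n).
Definition v3 n := t3 (v n).

Definition F (n : nat) : seq nat := Fof (vhist n).
Definition D (n : nat) : seq nat := Dof (vhist n).

(* Bl(K): maximal length of a run m, m+1, ..., m+j-1 contained in K
   (0 for K empty). A run of length j >= 1 starts at some m in K, and
   its j distinct elements lie in K, so j <= size K. *)
Definition run (K : seq nat) (m j : nat) : bool :=
  all (fun i => m + i \in K) (iota 0 j).
Definition Bl (K : seq nat) : nat :=
  \max_(m <- K) \max_(j < (size K).+1 | run K m j) j.

(* Main.v *)
Require Import Defs.
From mathcomp Require Import all_boot.
From mathcomp Require Import zify.
Import Defs.

Lemma mex_notin s : mex s \notin s.
Proof. by rewrite /mex; case: ex_minnP. Qed.

Lemma mex_min s y : y < mex s -> y \in s.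
Proof.
rewrite /mex; case: ex_minnP => m Hm Hmin Hy.
apply/negPn/negP => H; have := Hmin _ H; lia.
Qed.

Lemma mex_le s m : m \notin s -> mex s <= m.
Proof. by rewrite /mex; case: ex_minnP => m' _ Hmin /Hmin. Qed.

Lemma mex_ge_notin s y : y \notin s -> mex s <= y.
Proof. exact: mex_le. Qed.

Lemma mex_gt s y : (forall z, z <= y -> z \in s) -> y < mex s.
Proof.
move=> H; rewrite ltnNge; apply/negP => Hle.
by have := mex_notin s; rewrite H.
Qed.

Lemma mex_eqb s m : m \notin s -> all (fun y => y \in s) (iota 0 m) -> mex s = m.
Proof.
move=> Hn /allP Ha; apply/eqP; rewrite eqn_leq mex_le //=.
rewrite leqNgt; apply/negP => H.
have : mex s \in iota 0 m by rewrite mem_iota; lia.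
by move/Ha; rewrite (negbTE (mex_notin s)).
Qed.

Lemma mex_sub s t : {subset s <= t} -> mex s <= mex t.
Proof.
move=> st; rewrite leqNgt; apply/negP => /mex_min /st.
by rewrite (negbTE (mex_notin t)).
Qed.

Lemma size_vhist n : size (vhist n) = n.+1.
Proof. by elim: n => //= n IH; rewrite size_rcons IH. Qed.

Lemma vS n : v n.+1 = next (vhist n).
Proof. by rewrite /v /= nth_rcons size_vhist ltnn eqxx. Qed.

Lemma vhistE n : vhist n = [seq v k | k <- iota 0 n.+1].
Proof.
elim: n => [//|n IH].
change (vhist n.+1) with (rcons (vhist n) (Defs.next (vhist n))).
rewrite -vS IH -map_rcons; congr map.
by rewrite -cats1 -(addn1 n.+1) iotaD.
Qed.

Lemma inF n x : reflect (exists2 k, k <= n & [\/ x = v1 k, x = v2 k | x = v3 k]) (x \in F n).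
Proof.
rewrite /F /Fof vhistE; apply: (iffP flattenP).
  case=> s /mapP [t /mapP [k Hk ->] ->]; rewrite mem_iota in Hk.
  rewrite !inE => H; exists k; first lia.
  by case/orP: H => [/eqP->|/orP [/eqP->|/eqP->]]; [constructor 1|constructor 2|constructor 3].
case=> k Hk H; exists [:: t1 (v k); t2 (v k); t3 (v k)].
  apply/mapP; exists (v k) => //; apply/mapP; exists k => //; rewrite mem_iota; lia.
by rewrite !inE; case: H => ->; rewrite eqxx ?orbT.
Qed.

Lemma inD n x : reflect (exists2 k, k <= n &
   [\/ x = v2 k - v1 k, x = v3 k - v2 k | x = v3 k - v1 k]) (x \in D n).
Proof.
rewrite /D /Dof vhistE; apply: (iffP flattenP).
  case=> s /mapP [t /mapP [k Hk ->] ->]; rewrite mem_iota in Hk.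
  rewrite !inE => H; exists k; first lia.
  by case/orP: H => [/eqP->|/orP [/eqP->|/eqP->]]; [constructor 1|constructor 2|constructor 3].
case=> k Hk H; exists [:: t2 (v k) - t1 (v k); t3 (v k) - t2 (v k); t3 (v k) - t1 (v k)].
  apply/mapP; exists (v k) => //; apply/mapP; exists k => //; rewrite mem_iota; lia.
by rewrite !inE; case: H => ->; rewrite eqxx ?orbT.
Qed.

Lemma v0E : v 0 = (0, 0, 0). Proof. by []. Qed.

Lemma v1S n : v1 n.+1 = mex (F n).
Proof. by rewrite /v1 vS. Qed.
Lemma v2S n : v2 n.+1 = mex (shift (v1 n.+1) (D n) ++ iota 1 (v1 n.+1) ++ F n).
Proof. by rewrite /v2 v1S vS. Qed.
Lemma v3S n : v3 n.+1 = mex (shift (v2 n.+1) (D n) ++ iota 1 (v2 n.+1) ++ F n).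
Proof. by rewrite /v3 v2S v1S vS. Qed.

Lemma zeroF n : 0 \in F n.
Proof. by apply/inF; exists 0 => //; constructor 1. Qed.
Lemma zeroD n : 0 \in D n.
Proof. by apply/inD; exists 0 => //; constructor 1. Qed.

Lemma notinS p Dl Fl y : 0 \in Fl -> y \notin shift p Dl ++ iota 1 p ++ Fl ->
  [/\ p < y, y \notin Fl & y - p \notin Dl].
Proof.
move=> F0; rewrite !mem_cat !negb_or mem_iota => /and3P [H1 H2 H3].
have yp : p < y.
  rewrite ltnNge; apply/negP => Hy.
  have [y0|ypos] := posnP y; first by move: H3; rewrite y0 F0.
  move: H2; rewrite ypos /=; lia.
split => //; apply/negP => Hd; move/negP: H1; apply; apply/mapP.
by exists (y - p) => //; lia.
Qed.

Lemma notinS_intro p Dl Fl y : p < y -> y \notin Fl -> y - p \notin Dl ->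
  y \notin shift p Dl ++ iota 1 p ++ Fl.
Proof.
move=> yp yF yD; rewrite !mem_cat !negb_or mem_iota yF andbT; apply/andP; split.
  apply/negP => /mapP [z zD Ez]; move/negP: yD; apply; rewrite Ez.
  by have -> : p + z - p = z by lia.
lia.
Qed.

Lemma next_eq h a b c : mex (Fof h) = a ->
  mex (shift a (Dof h) ++ iota 1 a ++ Fof h) = b ->
  mex (shift b (Dof h) ++ iota 1 b ++ Fof h) = c -> Defs.next h = (a, b, c).
Proof. by rewrite /Defs.next => -> -> ->. Qed.

Lemma vhist1 : vhist 1 = [:: (0,0,0); (1,2,3)].
Proof.
change (vhist 1) with (rcons [:: (0,0,0)] (Defs.next [:: (0,0,0)])).
by rewrite (@next_eq _ 1 2 3) //; apply: mex_eqb.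
Qed.

Lemma vhist2 : vhist 2 = [:: (0,0,0); (1,2,3); (4,7,10)].
Proof.
change (vhist 2) with (rcons (vhist 1) (Defs.next (vhist 1))).
by rewrite vhist1 (@next_eq _ 4 7 10) //; apply: mex_eqb.
Qed.

Lemma v1E : v 1 = (1,2,3). Proof. by rewrite /v vhist1. Qed.
Lemma v2E : v 2 = (4,7,10). Proof. by rewrite /v vhist2. Qed.
Lemma dd0 : mex (D 0) = 1. Proof. by apply: mex_eqb. Qed.
Lemma dd1 : mex (D 1) = 3. Proof. by rewrite /D vhist1; apply: mex_eqb. Qed.
Lemma dd2 : mex (D 2) = 4. Proof. by rewrite /D vhist2; apply: mex_eqb. Qed.

Definition dd k := mex (D k).

Definition fact k := [/\ v2 k - v1 k < dd k, dd k <= v2 k - v1 k + 2, v1 k <= v2 k &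
   (0 < k -> v3 k = v2 k + dd k.-1 /\ v1 k + dd k.-1 <= v2 k <= v1 k + dd k.-1 + 2)].
Definition Inv n := forall k, k <= n -> fact k.

Lemma a00 : v1 0 = 0. Proof. by rewrite /v1 v0E. Qed.
Lemma b00 : v2 0 = 0. Proof. by rewrite /v2 v0E. Qed.
Lemma c00 : v3 0 = 0. Proof. by rewrite /v3 v0E. Qed.

Lemma F_mono n x : x \in F n -> x \in F n.+1.
Proof. by case/inF => k Hk H; apply/inF; exists k => //; lia. Qed.

Lemma a_lt1 k : v1 k < v1 k.+1.
Proof.
have Hin : v1 k \in F k by apply/inF; exists k => //; constructor 1.
have Hne : v1 k.+1 != v1 k.
  by apply/negP => /eqP E; move: (mex_notin (F k)); rewrite -v1S E Hin.
have Hle : v1 k <= v1 k.+1.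
  case: k Hin Hne => [|k] _ _; first by rewrite a00.
  by rewrite !v1S; apply: mex_sub => x; apply: F_mono.
by rewrite ltn_neqAle eq_sym Hne Hle.
Qed.

Lemma gap_le (f : nat -> nat) g N : (forall k, k < N -> f k + g <= f k.+1) ->
  forall i j, i < j -> j <= N -> f i + g <= f j.
Proof.
move=> H i; elim=> [//|j IH] Hij HjN.
have Hj := H j HjN.
case: (ltngtP i j) => [lt|gt|->]; [have := IH lt (ltnW HjN); lia|lia|done].
Qed.

Lemma a_lt i j : i < j -> v1 i < v1 j.
Proof.
move=> Hij; have := @gap_le v1 1 j (fun k _ => ltac:(rewrite addn1; exact: a_lt1 k)) i j Hij (leqnn j); lia.
Qed.

Lemma dd_pos k : 0 < dd k.
Proof. by apply: mex_gt => z; rewrite leqn0 => /eqP ->; apply: zeroD. Qed.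

Section Derived.
Variables (n : nat) (HI : Inv n).

Lemma ddS {k} : k < n -> dd k < dd k.+1.
Proof. move=> Hk; case: (HI k.+1 Hk) => H1 H2 H3 /(_ isT) /= [H4 H5]; lia. Qed.

Lemma ddle {i j} : i <= j -> j <= n -> dd i <= dd j.
Proof.
move=> Hij Hjn; case: (ltngtP i j) => [lt|gt|->//]; last lia.
have := @gap_le dd 1 n (fun k Hk => ltac:(rewrite addn1; exact: ddS Hk)) i j lt Hjn; lia.
Qed.

Lemma bgap {k} : k < n -> v2 k + 2 <= v2 k.+1.
Proof.
move=> Hk; case: (HI k (ltnW Hk)) => H1 H2 H3 _.
case: (HI k.+1 Hk) => _ _ _ /(_ isT) /= [_ H5].
have := a_lt1 k; lia.
Qed.

Lemma cgap {k} : k < n -> v3 k + 3 <= v3 k.+1.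
Proof.
move=> Hk; case: (HI k.+1 Hk) => _ _ _ /(_ isT) /= [H4 H5].
have := bgap Hk; have := a_lt1 k.
case: k Hk H4 H5 => [|k] Hk H4 H5.
  rewrite a00 b00 c00; have := dd_pos 0; lia.
case: (HI k.+1 (ltnW Hk)) => _ _ _ /(_ isT) /= [H6 H7].
have := ddS (ltnW Hk); lia.
Qed.

Lemma b_ne {i j} : i <= n -> j <= n -> v2 i <> v2 j + 1.
Proof.
move=> Hi Hj; case: (ltngtP i j) => [lt|gt|->]; last lia.
  have := @gap_le v2 2 n (fun k Hk => bgap Hk) i j lt Hj; lia.
have := @gap_le v2 2 n (fun k Hk => bgap Hk) j i gt Hi; lia.
Qed.

Lemma c_ne {i j} : i <= n -> j <= n -> v3 i <> v3 j + 1 /\ v3 i <> v3 j + 2.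
Proof.
move=> Hi Hj; case: (ltngtP i j) => [lt|gt|->]; last lia.
  have := @gap_le v3 3 n (fun k Hk => cgap Hk) i j lt Hj; lia.
have := @gap_le v3 3 n (fun k Hk => cgap Hk) j i gt Hi; lia.
Qed.

Lemma bmono {k} : k <= n -> v2 k <= v2 n.
Proof.
move=> Hk; case: (ltngtP k n) => [lt|gt|->//]; last lia.
have := @gap_le v2 2 n (fun k Hk => bgap Hk) k n lt (leqnn n); lia.
Qed.

Lemma cmono {k} : k <= n -> v3 k <= v3 n.
Proof.
move=> Hk; case: (ltngtP k n) => [lt|gt|->//]; last lia.
have := @gap_le v3 3 n (fun k Hk => cgap Hk) k n lt (leqnn n); lia.
Qed.

Lemma le23 {k} : k <= n -> v1 k <= v2 k <= v3 k.
Proof.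
move=> Hk; case: (HI _ Hk) => _ _ H3 H4; rewrite H3 /=.
case: k Hk H3 H4 => [|k] Hk H3 H4; first by rewrite b00 c00.
have [-> _] := H4 isT; lia.
Qed.

Lemma Fle {x} : x \in F n -> x <= v3 n.
Proof.
case/inF => k Hk H; have := cmono Hk; have := le23 Hk.
by case: H => ->; lia.
Qed.

Lemma Fabove {x} : x \in F n -> v1 n < x -> exists2 k, k <= n & (x = v2 k \/ x = v3 k).
Proof.
case/inF => k Hk H Hx; exists k => //; case: H => E; [|by left|by right].
exfalso; have : v1 k <= v1 n.
  case: (ltngtP k n) => [lt|gt|->//]; [by move/a_lt: lt; lia|lia].
lia.
Qed.

Lemma four {x} : (forall i, i < 4 -> exists2 k, k <= n & (x + i = v2 k \/ x + i = v3 k)) -> False.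
Proof.
move=> H.
have [k0 H0 E0] := H 0 isT; have [k1 H1 E1] := H 1 isT.
have [k2 H2 E2] := H 2 isT; have [k3 H3 E3] := H 3 isT.
case: E0 => E0; case: E1 => E1; case: E2 => E2; case: E3 => E3.
all: first [ (have := b_ne H0 H1; lia) | (have := c_ne H0 H1; lia) | (have := b_ne H0 H2; lia) | (have := c_ne H0 H2; lia) | (have := b_ne H0 H3; lia) | (have := c_ne H0 H3; lia) | (have := b_ne H1 H0; lia) | (have := c_ne H1 H0; lia) | (have := b_ne H1 H2; lia) | (have := c_ne H1 H2; lia) | (have := b_ne H1 H3; lia) | (have := c_ne H1 H3; lia) | (have := b_ne H2 H0; lia) | (have := c_ne H2 H0; lia) | (have := b_ne H2 H1; lia) | (have := c_ne H2 H1; lia) | (have := b_ne H2 H3; lia) | (have := c_ne H2 H3; lia) | (have := b_ne H3 H0; lia) | (have := c_ne H3 H0; lia) | (have := b_ne H3 H1; lia) | (have := c_ne H3 H1; lia) | (have := b_ne H3 H2; lia) | (have := c_ne H3 H2; lia) ].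
Qed.

Lemma Dabove {x} : x \in D n -> dd n <= x -> exists2 k, 0 < k <= n & x = v3 k - v1 k.
Proof.
case/inD => k Hk H Hx.
case: (HI _ Hk) => H1 H2 H3 H4.
have Hdk := ddle Hk (leqnn n).
case: H => E.
- lia.
- case: k Hk H1 H2 H3 H4 Hdk E => [|k] Hk H1 H2 H3 H4 Hdk E.
    by move: E; rewrite b00 c00 => E; have := dd_pos n; lia.
  have [H5 _] := H4 isT; have := ddS Hk; move: E; rewrite H5 /=; lia.
- case: k Hk H1 H2 H3 H4 Hdk E => [|k] Hk H1 H2 H3 H4 Hdk E.
    by move: E; rewrite a00 c00 => E; have := dd_pos n; lia.
  by exists k.+1.
Qed.

Lemma sgap {k} : 0 < k -> k < n -> v3 k - v1 k + 2 <= v3 k.+1 - v1 k.+1.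
Proof.
move=> Hk0 Hk.
case: (HI _ (ltnW Hk)) => H1 H2 H3 /(_ Hk0) [H4 H5].
case: (HI k.+1 Hk) => _ _ _ /(_ isT) /= [H6 H7].
have := ddS (k:=k.-1); have := a_lt1 k.
case: k Hk0 Hk H1 H2 H3 H4 H5 H6 H7 => [//|k] Hk0 Hk H1 H2 H3 H4 H5 H6 H7 /= A B.
have := B (ltnW Hk); lia.
Qed.

Lemma s_ne {i j} : 0 < i <= n -> 0 < j <= n -> v3 i - v1 i <> v3 j - v1 j + 1.
Proof.
move=> Hi Hj.
pose f m := v3 m.+1 - v1 m.+1.
have G : forall k, k < n.-1 -> f k + 2 <= f k.+1.
  by move=> k Hk; rewrite /f; apply: sgap => //; lia.
case: i Hi => [//|i] Hi; case: j Hj => [//|j] Hj.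
change (f i <> f j + 1).
case: (ltngtP i j) => [lt|gt|->]; last lia.
  have := @gap_le f 2 n.-1 G i j lt ltac:(lia); lia.
have := @gap_le f 2 n.-1 G j i gt ltac:(lia); lia.
Qed.

Lemma Dnc {x} : x \in D n -> dd n <= x -> x.+1 \notin D n.
Proof.
move=> Hx Hd; apply/negP => Hx1.
have [i Hi Ei] := Dabove Hx Hd.
have [j Hj Ej] := Dabove Hx1 (leqW Hd).
have := s_ne Hj Hi; lia.
Qed.

End Derived.

Lemma D_mono n x : x \in D n -> x \in D n.+1.
Proof. by case/inD => k Hk H; apply/inD; exists k => //; lia. Qed.

Lemma D_new n x : [\/ x = v2 n.+1 - v1 n.+1, x = v3 n.+1 - v2 n.+1 | x = v3 n.+1 - v1 n.+1] ->
  x \in D n.+1.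
Proof. by move=> H; apply/inD; exists n.+1. Qed.

Lemma D_S n x : x \in D n.+1 -> x \in D n \/
  [\/ x = v2 n.+1 - v1 n.+1, x = v3 n.+1 - v2 n.+1 | x = v3 n.+1 - v1 n.+1].
Proof.
case/inD => k Hk H; case: (ltngtP k n.+1) => [lt|gt|E]; [|lia|].
  by left; apply/inD; exists k => //; lia.
by right; rewrite -E.
Qed.

Lemma step n : Inv n -> 2 <= n -> fact n.+1.
Proof.
move=> HI n2.
have Ha := v1S n. set a := v1 n.+1 in Ha *.
have aF : a \notin F n by rewrite Ha; apply: mex_notin.
set d := dd n.
have d3 : 3 <= d.
  by have := ddle _ HI n2 (leqnn n); rewrite {1}/dd dd2 => H; rewrite /d; lia.
have Hb := v2S n. set b := v2 n.+1 in Hb *.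
have bS := mex_notin (shift a (D n) ++ iota 1 a ++ F n); rewrite -Hb in bS.
have [ab bF bD] := notinS _ _ _ _ (zeroF n) bS; clear bS.
have bd : d <= b - a.
  rewrite leqNgt; apply/negP => /mex_min H; by rewrite H in bD.
have dD : d \notin D n by apply: mex_notin.
have an : v1 n < a := a_lt1 n.
case: (HI n (leqnn n)) => Hn1 Hn2 Hn3 /(_ ltac:(lia)) [Hn4 Hn5].
have bmax : forall k, k <= n -> v2 k < a + d.
  move=> k Hk; have := bmono _ HI Hk; rewrite /d; lia.
have Hbcase : b = a + d \/ b = a + d + 1 \/ (b = a + d + 2 /\ d.+1 \in D n).
  case E: (a + d \in F n).
    have [k Hk [Ek|Ek]] := Fabove _ E ltac:(lia).
      by have := bmax k Hk; lia.
    have noF : forall j, 0 < j < 3 -> a + d + j \notin F n.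
      move=> j Hj; apply/negP => Hj'.
      have [k' Hk' [Ek'|Ek']] := Fabove _ Hj' ltac:(lia).
        by have := bmax k' Hk'; lia.
      have := c_ne _ HI Hk' Hk; lia.
    case E1: (d.+1 \in D n).
      have E2 : d.+2 \notin D n by apply: (Dnc _ HI E1); rewrite /d; lia.
      have : b <= a + d + 2.
        rewrite Hb; apply: mex_le; apply: notinS_intro; first lia.
          by apply: noF.
        by have -> : a + d + 2 - a = d.+2 by lia.
      have : b != a + d by apply/negP => /eqP Eb; rewrite -Eb in E; rewrite E in bF.
      have : b != a + d + 1.
        apply/negP => /eqP Eb; move: bD; rewrite Eb.
        (have -> : a + d + 1 - a = d.+1 by lia); by rewrite E1.
      move=> /eqP ? /eqP ? ?; right; right; split => //; lia.
    have : b <= a + d + 1.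
      rewrite Hb; apply: mex_le; apply: notinS_intro; first lia.
        by apply: noF.
      (have -> : a + d + 1 - a = d.+1 by lia); by rewrite E1.
    have : b != a + d by apply/negP => /eqP Eb; rewrite -Eb in E; rewrite E in bF.
    move=> /eqP ? ?; right; left; lia.
  have : b <= a + d.
    rewrite Hb; apply: mex_le; apply: notinS_intro; first lia.
      by rewrite E.
    by have -> : a + d - a = d by lia.
  move=> ?; left; lia.
have Hc := v3S n. rewrite -/b in Hc. set c := v3 n.+1 in Hc *.
have cS := mex_notin (shift b (D n) ++ iota 1 b ++ F n); rewrite -Hc in cS.
have [bc cF cD] := notinS _ _ _ _ (zeroF n) cS; clear cS.
have cd : d <= c - b.
  rewrite leqNgt; apply/negP => /mex_min H; by rewrite H in cD.
have ddn : dd n.-1 < d.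
  have Hn' : n.-1 < n by lia.
  have := ddS _ HI Hn'; rewrite prednK //; lia.
have Ec : c = b + d.
  have : c <= b + d; last lia.
  rewrite Hc; apply: mex_le; apply: notinS_intro; first lia.
    apply/negP => /(Fle _ HI); lia.
  by have -> : b + d - b = d by lia.
have ltd : b - a < dd n.+1.
  apply: mex_gt => z Hz.
  case: (ltnP z d) => Hzd.
    by apply: D_mono; apply: mex_min.
  case: (ltngtP z d) => [|Hzd'|Hzd']; first lia.
    case: Hbcase => [?|[?|[? H1]]]; first lia.
      by apply: D_new; constructor 1; lia.
    case: (ltngtP z d.+1) => [|?|->]; first lia.
      by apply: D_new; constructor 1; lia.
    by apply: D_mono.
  by apply: D_new; constructor 2; rewrite Hzd'; lia.
have led : dd n.+1 <= b - a + 2.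
  have [y [Hy1 Hy2 HyD]] : exists y, [/\ b - a < y, y <= b - a + 2 & y \notin D n].
    case E: ((b - a).+1 \in D n).
      exists (b - a).+2; split => //; first lia.
      by apply: (Dnc _ HI E); rewrite /d in bd; lia.
    by exists (b - a).+1; rewrite E; split => //; lia.
  have : dd n.+1 <= y; last lia.
  apply: mex_le; apply/negP => /D_S [|]; first by rewrite (negbTE HyD).
  rewrite -/a -/b -/c; case => ?; lia.
split => //; [lia|] => _ /=; split; [exact: Ec|lia].
Qed.

Lemma Inv2 : Inv 2.
Proof.
move=> k; rewrite leq_eqVlt ltnS leq_eqVlt ltnS leqn0 => /or3P [] /eqP ->;
rewrite /fact /dd /v1 /v2 /v3 ?v2E ?v1E ?v0E ?dd2 ?dd1 ?dd0 //=.
Qed.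

Lemma Inv_all n : Inv n.
Proof.
have H : forall m, Inv (m + 2).
  elim=> [|m IH]; first exact: Inv2.
  move=> k Hk; case: (ltngtP k (m.+1 + 2)) => [lt|gt|->]; first by apply: IH; lia.
    lia.
  by rewrite addSn; apply: step IH _; lia.
by move=> k Hk; apply: (H n); lia.
Qed.

Lemma factn k : fact k. Proof. exact: (Inv_all k) k (leqnn k). Qed.

Lemma da n : 1 <= v1 n.+1 - v1 n <= 4.
Proof.
have := a_lt1 n => Hlt.
suff : v1 n.+1 <= v1 n + 4 by lia.
have [i Hi HiF] : exists2 i, i < 4 & v1 n + 1 + i \notin F n.
  case E0: (v1 n + 1 + 0 \in F n); last by exists 0; rewrite ?E0.
  case E1: (v1 n + 1 + 1 \in F n); last by exists 1; rewrite ?E1.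
  case E2: (v1 n + 1 + 2 \in F n); last by exists 2; rewrite ?E2.
  case E3: (v1 n + 1 + 3 \in F n); last by exists 3; rewrite ?E3.
  exfalso; apply: (four _ (Inv_all n) (x := v1 n + 1)) => i Hi.
  apply: Fabove; last lia.
  by case: i Hi => [|[|[|[|]]]] //= _.
rewrite v1S; have := mex_le _ _ HiF; lia.
Qed.

Theorem theorem6 :
  (forall n : nat,
     Bl [seq x <- F n | (mex (F n) <= x) && (x < mex (F n) + mex (D n))] <= 3)
  /\ (forall n : nat, 1 <= v1 n.+1 - v1 n <= 4)
  /\ (forall n : nat, 2 <= v2 n.+1 - v2 n <= 8)
  /\ (forall n : nat, 3 <= v3 n.+1 - v3 n <= 12)
  /\ (forall n : nat, 1 <= n -> 1 <= mex (D n) - mex (D n.-1) <= 4).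
Proof.
have Hb : forall n : nat, 2 <= v2 n.+1 - v2 n <= 8.
  move=> n; have := da n; case: (factn n) => H1 H2 H3 _.
  case: (factn n.+1) => _ _ _ /(_ isT) /= [_ H5]; lia.
split; last split; [|exact: da|split; [exact: Hb|split]].
- move=> n; rewrite /Bl.
  apply: (big_ind (fun x => x <= 3)) => // [x y Hx Hy|m _]; first by rewrite geq_max Hx Hy.
  apply: (big_ind (fun x => x <= 3)) => // [x y Hx Hy|j Hj]; first by rewrite geq_max Hx Hy.
  rewrite leqNgt; apply/negP => Hj4.
  apply: (four _ (Inv_all n) (x := m)) => i Hi.
  have : m + i \in [seq x <- F n | (mex (F n) <= x) && (x < mex (F n) + mex (D n))].
    by apply: (allP Hj); rewrite mem_iota; lia.
  rewrite mem_filter => /andP [/andP [H1 _] H3].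
  apply: Fabove H3 _; have := a_lt1 n; rewrite v1S; lia.
- move=> n; have := Hb n; case: (factn n.+1) => _ _ _ /(_ isT) /= [H4 H5].
  case: n H4 H5 => [|n] H4 H5.
    rewrite H4 b00 c00; have := dd_pos 0; case: (factn 0) => H1 H2 _ _.
    rewrite a00 b00 in H1 H2; lia.
  case: (factn n.+1) => H1 H2 H3 /(_ isT) /= [H6 H7]; lia.
- move=> n Hn; case: (factn n) => H1 H2 H3 /(_ Hn) [_ H5].
  change (mex (D n)) with (dd n); change (mex (D n.-1)) with (dd n.-1); lia.
Qed.
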